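(* Let $m$ be a positive integer and let $p$ be a positive integer which is a multiple of $m$ if $m$ is odd and a multiple of $2m$ if $m$ is even. Let $S$ be a $p$-periodic sequence of elements of $\mathbb{Z}/m\mathbb{Z}$ whose orbit is $(p,p)$-periodic. Then the triangles $\nabla S[\lambda p]$ are balanced for all non-negative integers $\lambda$ if and only if there exist two distinct positive integers $\lambda_1,\lambda_2$ such that $\nabla S[\lambda_1p]$ and $\nabla S[\lambda_2p]$ are balanced.
   Context: A sequence $S=(u_j)_{j\in\mathbb{Z}}$ is $p$-periodic if $u_{j+p}=u_j$ for all $j$. $S[n]=(u_0,\dots,u_{n-1})$. The orbit of $S$ is $(a_{i,j})_{(i,j)\in\mathbb{N}\times\mathbb{Z}}$ with $a_{0,j}=u_j$, $a_{i,j}=-a_{i-1,j}-a_{i-1,j+1}$ for $i\ge1$; it is $(p,q)$-periodic if $a_{i+q,j}=a_{i,j+p}=a_{i,j}$ for all $(i,j)$. For a finite sequence $(u_0,\dots,u_{n-1})$, $\nabla(u_0,\dots,u_{n-1})=(a_{i,j})_{i,j\ge0,i+j<n}$ defined by the same rule; it is balanced if every element of $\mathbb{Z}/m\mathbb{Z}$ occurs the same number of times among its entries. *)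

(* Defs.v *)
From HB Require Import structures.
From mathcomp Require Import all_boot all_order all_algebra.
Set Implicit Arguments. Unset Strict Implicit. Unset Printing Implicit Defensive.
Import GRing.Theory.
Local Open Scope ring_scope.

(* Z/mZ for a positive integer m: the ordinals 'I_m, written 'I_(m.-1).+1 so
   that the canonical ring structure of Zp is available (for 0 < m this is
   exactly 'I_m with addition/opposite mod m). *)
Notation Zmod m := ('I_(m.-1).+1).

Definition periodic (m : nat) (S : int -> Zmod m) (p : nat) : Prop :=
  forall j : int, S (j + p%:Z) = S j.

Fixpoint orbit (m : nat) (S : int -> Zmod m) (i : nat) (j : int) : Zmod m :=
  match i with
  | 0 => S j
  | i'.+1 => - orbit S i' j - orbit S i' (j + 1)
  end.

Definition orbit_periodic (m : nat) (S : int -> Zmod m) (p q : nat) : Prop :=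
  forall (i : nat) (j : int),
    orbit S (i + q) j = orbit S i j /\ orbit S i (j + p%:Z) = orbit S i j.

Definition Sprefix (m : nat) (S : int -> Zmod m) (n : nat) : seq (Zmod m) :=
  [seq S (Posz j) | j <- iota 0 n].

(* Derived triangle of a finite sequence u = (u_0,...,u_{n-1}):
   a_{0,j} = u_j, a_{i,j} = -a_{i-1,j} - a_{i-1,j+1}; meaningful for i+j < n. *)
Fixpoint nabla (m : nat) (u : seq (Zmod m)) (i j : nat) : Zmod m :=
  match i with
  | 0 => nth 0 u j
  | i'.+1 => - nabla u i' j - nabla u i' j.+1
  end.

Definition occ (m : nat) (u : seq (Zmod m)) (x : Zmod m) : nat :=
  #|[set ij : 'I_(size u) * 'I_(size u) |
       ((ij.1 : nat) + ij.2 < size u)%N && (nabla u ij.1 ij.2 == x)]|.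

Definition balanced (m : nat) (u : seq (Zmod m)) : Prop :=
  forall x y : Zmod m, occ u x = occ u y.

(* Main.v *)
Require Import Defs.
From mathcomp Require Import all_boot all_order all_algebra.
From mathcomp Require Import zify.

Section H.
Variables (m p : nat) (S : int -> Zmod m) (x : Zmod m).
Hypothesis hper : orbit_periodic S p p.

Definition F (i j : nat) : nat := (Defs.orbit S i (Posz j) == x).
Definition C (n : nat) := \sum_(0 <= i < n) \sum_(0 <= j < n - i) F i j.
Definition Q := \sum_(0 <= i < p) \sum_(0 <= j < p) F i j.

Lemma Fi i j : F (i + p) j = F i j.
Proof. by rewrite /F (proj1 (hper i (Posz j))). Qed.

Lemma Fj i j : F i (j + p) = F i j.
Proof. by rewrite /F PoszD (proj2 (hper i (Posz j))). Qed.

Lemma Fjk i j k : F i (j + k * p) = F i j.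
Proof. elim: k => [|k IH]; first by rewrite mul0n addn0. by rewrite mulSn (addnC p) addnA Fj. Qed.

Lemma strip l i : \sum_(0 <= j < l * p) F i j = l * \sum_(0 <= j < p) F i j.
Proof.
elim: l => [|l IH]; first by rewrite mul0n big_geq.
rewrite (big_cat_nat _ (n := l * p)) //=; last by rewrite mulSn leq_addl.
rewrite -[X in X + _]/(\sum_(0 <= j < l * p) F i j) IH.
rewrite -{1}(add0n (l * p)) big_addn mulSn addnK.
have -> : \sum_(0 <= j < p) F i (j + l * p) = \sum_(0 <= j < p) F i j by apply: eq_bigr => j _; rewrite Fjk.
by rewrite mulSn addnC.
Qed.

Lemma Cstep l : C (l.+1 * p) = C (l * p) + l * Q + C p.
Proof.
rewrite /C (big_cat_nat _ (n := p)) //=; last by rewrite mulSn leq_addr.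
have -> : \sum_(p <= i < l.+1 * p) \sum_(0 <= j < l.+1 * p - i) F i j
   = \sum_(0 <= i < l * p) \sum_(0 <= j < l * p - i) F i j.
  rewrite -{1}(add0n p) big_addn.
  have -> : l.+1 * p - p = l * p by rewrite mulSn addKn.
  apply: eq_bigr => i _.
  have -> : l.+1 * p - (i + p) = l * p - i by rewrite mulSn; lia.
  by apply: eq_bigr => j _; rewrite Fi.
rewrite addnC -addnA; congr (_ + _).
rewrite /Q big_distrr -big_split /=.
apply: eq_big_nat => i /andP[_ ip].
rewrite (big_cat_nat _ (n := l * p)) //=; last by rewrite mulSn; lia.
rewrite strip; congr (_ + _).
rewrite -{1}(add0n (l * p)) big_addn.
have -> : l.+1 * p - i - l * p = p - i by rewrite mulSn; lia.
by under eq_bigr => j _ do rewrite Fjk.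
Qed.

Lemma Cform l : 2 * C (l * p) = l * (l - 1) * Q + 2 * l * C p.
Proof.
elim: l => [|l IH]; first by rewrite /C mul0n big_geq.
rewrite Cstep !mulnDr IH; case: l {IH} => [|l] /=; first by rewrite !muln0 !mul0n.
rewrite !subn1 /=. nia.
Qed.

End H.


Lemma occE m (u : seq (Zmod m)) x : occ u x =
  \sum_(i < size u) \sum_(j < size u) ((i + j < size u) && (nabla u i j == x)).
Proof.
rewrite pair_big /= /occ -sum1_card big_mkcond /=.
by apply: eq_bigr => -[i j] _; rewrite inE /=; case: (_ && _).
Qed.

Lemma nablaE m (S : int -> Zmod m) N i j : i + j < N ->
  nabla (Sprefix S N) i j = Defs.orbit S i (Posz j).
Proof.
elim: i j => [|i IH] j /= h.
  by rewrite /Sprefix (nth_map 0) ?size_iota // nth_iota.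
rewrite IH ?IH; try lia.
by rewrite -[(Posz j + 1)%R]/(Posz (j + 1)) addn1.
Qed.

Lemma occC m (S : int -> Zmod m) N x : occ (Sprefix S N) x = @C m S x N.
Proof.
rewrite occE size_map size_iota /C.
rewrite -(big_mkord xpredT (fun i => \sum_(j < N) (i + j < N) && (nabla (Sprefix S N) i j == x))).
apply: eq_big_nat => i _.
rewrite -(big_mkord xpredT (fun j => nat_of_bool ((i + j < N) && (nabla (Sprefix S N) i j == x)))).
rewrite (big_cat_nat _ (n := N - i)) //=; last lia.
rewrite [X in _ + X]big1_seq ?addn0; last first.
  move=> j /andP[_]; rewrite mem_index_iota => /andP[h _].
  by have -> : (i + j < N) = false by lia.
apply: eq_big_nat => j /andP[_ h].
have hij : i + j < N by lia.
by rewrite hij nablaE.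
Qed.


Lemma key (a b qx qy tx ty : nat) : a <> b ->
  a * qx + 2 * tx = a * qy + 2 * ty -> b * qx + 2 * tx = b * qy + 2 * ty ->
  qx = qy /\ tx = ty.
Proof.
move=> hab e1 e2.
have hq : qx = qy.
  have [h|h|h] := ltngtP qx qy; last by [].
  - have : a * qx + b * qy = a * qy + b * qx by lia.
    move=> e; exfalso; apply: hab.
    have [h'|h'|h'] := ltngtP a b; last by [].
    + have : a * (qy - qx) < b * (qy - qx) by rewrite ltn_pmul2r ?subn_gt0.
      rewrite !mulnBr; lia.
    + have : b * (qy - qx) < a * (qy - qx) by rewrite ltn_pmul2r ?subn_gt0.
      rewrite !mulnBr; lia.
  - have : a * qx + b * qy = a * qy + b * qx by lia.
    move=> e; exfalso; apply: hab.
    have [h'|h'|h'] := ltngtP a b; last by [].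
    + have : a * (qx - qy) < b * (qx - qy) by rewrite ltn_pmul2r ?subn_gt0.
      rewrite !mulnBr; lia.
    + have : b * (qx - qy) < a * (qx - qy) by rewrite ltn_pmul2r ?subn_gt0.
      rewrite !mulnBr; lia.
subst qy; split => //; lia.
Qed.

Local Open Scope ring_scope.

Theorem proposition14 (m p : nat) (S : int -> Zmod m) :
  (0 < m)%N -> (0 < p)%N ->
  (if odd m then (m %| p)%N else ((2 * m) %| p)%N) ->
  periodic S p -> orbit_periodic S p p ->
  ((forall lambda : nat, balanced (Sprefix S (lambda * p)%N))
   <->
   (exists lambda1 lambda2 : nat,
      [/\ (0 < lambda1)%N, (0 < lambda2)%N, lambda1 <> lambda2,
          balanced (Sprefix S (lambda1 * p)%N) & balanced (Sprefix S (lambda2 * p)%N)])).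
Proof.
move=> _ _ _ _ hper; split.
  by move=> H; exists 1%N, 2%N; split.
move=> [l1 [l2 [h1 h2 hne b1 b2]]] l x y.
have e1 := b1 x y; have e2 := b2 x y.
rewrite !occC in e1 e2 *.
have c1 : forall l z, (2 * C m S z (l * p) = l * (l - 1) * Q m p S z + 2 * l * C m S z p)%N.
  by move=> l' z; apply: Cform.
have [hq ht] : Q m p S x = Q m p S y /\ C m S x p = C m S y p.
have k1x := c1 l1 x; have k1y := c1 l1 y; have k2x := c1 l2 x; have k2y := c1 l2 y.
rewrite e1 in k1x; rewrite e2 in k2x.
move: k1x k1y k2x k2y.
move: (C m S y (l1 * p)) (C m S y (l2 * p)) => c1y c2y.
case: l1 h1 hne {e1 b1} => // a1 _ hne; case: l2 h2 hne {e2 b2} => // a2 _ hne.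
rewrite !subSS !subn0.
move: (Q m p S x) (Q m p S y) (C m S x p) (C m S y p) => qx qy tx ty k1 k2 k3 k4.
have f1 : (a1 * qx + 2 * tx = a1 * qy + 2 * ty)%N.
  apply/eqP; rewrite -(eqn_pmul2l (ltn0Sn a1)); apply/eqP; nia.
have f2 : (a2 * qx + 2 * tx = a2 * qy + 2 * ty)%N.
  apply/eqP; rewrite -(eqn_pmul2l (ltn0Sn a2)); apply/eqP; nia.
  by apply: (@key a1 a2 qx qy tx ty _ f1 f2); lia.
apply/eqP; rewrite -(eqn_pmul2l (isT : (0 < 2)%N)) !c1 hq ht //.
Qed.
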